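(* Let $\alpha$ and $\beta$ be ribbons such that $[\alpha]=[\beta]$. Then $\beta=\alpha_\pi$ for some permutation $\pi$; that is, $\alpha$ and $\beta$ have the same number $m$ of rows, and the sequence of row lengths of $\beta$ is a rearrangement of the sequence of row lengths of $\alpha$.
   Context: A ribbon is a connected skew shape (in English notation) containing no $2\times 2$ block of boxes. A composition $\alpha=(\alpha_1,\dots,\alpha_m)$ determines the unique ribbon with $m$ rows whose $i$-th row from the top has $\alpha_i$ boxes; consecutive rows $i$ and $i+1$ share exactly one column, the leftmost box of row $i$ lying directly above the rightmost box of row $i+1$. For $\pi\in S_m$, $\alpha_\pi=(\alpha_{\pi^{-1}(1)},\dots,\alpha_{\pi^{-1}(m)})$. For a skew shape $\lambda/\mu$, write $s_{\lambda/\mu}=\sum_\nu c^{\lambda}_{\mu,\nu}s_\nu$ (expansion in Schur functions $s_\nu$ over partitions $\nu$); the Schur support is $[\lambda/\mu]=\{\nu : c^\lambda_{\mu,\nu}>0\}$. (The proof may use McNamara's theorem that two skew shapes with equal Schur support contain the same number of $k\times\ell$ rectangles as subdiagrams for all $k,\ell\ge 1$.) *)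

(* Defs.v *)
From mathcomp Require Import all_boot.
Set Implicit Arguments. Unset Strict Implicit. Unset Printing Implicit Defensive.

Definition is_partition (nu : seq nat) : Prop :=
  all (fun x => 0 < x) nu /\ sorted geq nu.

Definition is_composition (a : seq nat) : Prop := all (fun x => 0 < x) a.

(* Skew shape lam/mu in English notation, rows and columns 0-indexed:
   cell (i,j) belongs to lam/mu iff nth 0 mu i <= j < nth 0 lam i. *)
Definition in_skew (lam mu : seq nat) (i j : nat) : bool :=
  (nth 0 mu i <= j) && (j < nth 0 lam i).

Definition reading_word (lam mu : seq nat) (T : nat -> nat -> nat) : seq nat :=
  flatten [seq [seq T i j | j <- rev (iota (nth 0 mu i) (nth 0 lam i - nth 0 mu i))]
          | i <- iota 0 (size lam)].

(* Littlewood-Richardson tableau of shape lam/mu and content nu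
   (letters are 0-indexed: letter k stands for k+1). *)
Definition LR_tableau (lam mu nu : seq nat) (T : nat -> nat -> nat) : Prop :=
  (forall i j, in_skew lam mu i j -> in_skew lam mu i j.+1 -> T i j <= T i j.+1) /\
  (forall i j, in_skew lam mu i j -> in_skew lam mu i.+1 j -> T i j < T i.+1 j) /\
  (forall k, count_mem k (reading_word lam mu T) = nth 0 nu k) /\
  (forall n k, count_mem k.+1 (take n (reading_word lam mu T))
               <= count_mem k (take n (reading_word lam mu T))).

(* Schur support [lam/mu] = { nu : c^lam_{mu,nu} > 0 }, where by the
   Littlewood-Richardson rule c^lam_{mu,nu} is the number of LR tableaux of
   shape lam/mu and content nu. *)
Definition schur_support (lam mu nu : seq nat) : Prop :=
  is_partition nu /\ exists T, LR_tableau lam mu nu T.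

(* The ribbon of a composition a = (a_1,...,a_m): row i (from the top) has a_i
   boxes, and the leftmost box of row i lies above the rightmost box of row i+1.
   Bottom row starts at column 0; row i starts at column sum_{k>i} (a_k - 1). *)
Definition ribbon_outer (a : seq nat) : seq nat :=
  [seq (sumn (map predn (drop i a))).+1 | i <- iota 0 (size a)].
Definition ribbon_inner (a : seq nat) : seq nat :=
  [seq sumn (map predn (drop i.+1 a)) | i <- iota 0 (size a)].

Definition ribbon_support (a : seq nat) (nu : seq nat) : Prop :=
  schur_support (ribbon_outer a) (ribbon_inner a) nu.

(* Main.v *)
Require Import Defs.
From mathcomp Require Import all_boot zify.

Definition fsum (s : seq nat) (t : nat) := sumn [seq a - t | a <- s].

Lemma fsum_step s t : fsum s t = fsum s t.+1 + count (fun a => t < a) s.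
Proof. elim: s => [|a s IH] //=. rewrite /fsum /= -/(fsum s t) -/(fsum s t.+1) IH.
case: ltnP => h /=; lia. Qed.

Lemma count_gt_split s t : count (fun a => t < a) s = count_mem t.+1 s + count (fun a => t.+1 < a) s.
Proof. elim: s => [|a s IH] //=. rewrite IH. case: ltngtP => h /=; case: eqP => e; lia. Qed.

Lemma count0_pos s : all (fun x => 0 < x) s -> count_mem 0 s = 0.
Proof. elim: s => [|a s IH] //= /andP [h1 h2]. rewrite IH //. case: eqP => e; lia. Qed.

Lemma fsum_perm s1 s2 t : perm_eq s1 s2 -> fsum s1 t = fsum s2 t.
Proof. move=> h; apply: perm_sumn; exact: perm_map. Qed.

Lemma partD a b : is_composition a -> is_composition b ->
  (forall t, fsum a t = fsum b t) -> perm_eq a b.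
Proof.
move=> ha hb hf.
have hc : forall t, count (fun x => t < x) a = count (fun x => t < x) b.
  move=> t; have := hf t; rewrite (fsum_step a) (fsum_step b) (hf t.+1); lia.
apply/allP => x _; apply/eqP.
case: x => [|x]; first by rewrite !count0_pos.
have := hc x; rewrite (count_gt_split a) (count_gt_split b) (hc x.+1); lia.
Qed.

Definition lattice (w : seq nat) := forall n k, count_mem k.+1 (take n w) <= count_mem k (take n w).
Definition F (N t : nat) (w : seq nat) := \sum_(x < N) (count_mem (nat_of_ord x) w - t).

Lemma lattice_take w m : lattice w -> lattice (take m w).
Proof.
move=> h n k. case: (leqP n m) => hnm; first by rewrite take_takel.
rewrite take_taker; [exact: h| lia].
Qed.

Lemma lattice_iter w a b : lattice w -> a <= b -> count_mem b w <= count_mem a w.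
Proof.
move=> h; elim: b => [|b IH]; first by rewrite leqn0 => /eqP ->.
rewrite leq_eqVlt => /orP [/eqP -> //| hab].
apply: leq_trans (IH hab). have := h (size w) b. by rewrite take_size.
Qed.

Lemma F_rcons N t w z : z < N -> F N t (rcons w z) = F N t w + (t <= count_mem z w).
Proof.
move=> hz. rewrite /F (bigD1 (Ordinal hz)) //= [in RHS](bigD1 (Ordinal hz)) //=.
rewrite -cats1 count_cat /= eqxx.
have -> : \sum_(i < N | i != Ordinal hz) (count_mem (nat_of_ord i) (w ++ [:: z]) - t)
   = \sum_(i < N | i != Ordinal hz) (count_mem (nat_of_ord i) w - t).
  apply: eq_bigr => i hi. rewrite count_cat /=.
  have : (z == i) = false.
    apply/negbTE; apply: contra hi => /eqP e; apply/eqP; apply: val_inj => /=; by rewrite e.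
  by move=> ->; rewrite /= !addn0.
rewrite /=; set S := \sum_(_ < _ | _) _; case: leqP => h /=; lia.
Qed.

Lemma L1 N t s : forall w y r, lattice (w ++ s) -> all (fun x => x < N) (w ++ s) ->
  path geq y s -> r <= count_mem y w ->
  F N t w + (r + size s - t) <= F N t (w ++ s) + (r - t).
Proof.
elim: s => [|z s IH] w y r hl hN hp hr; first by rewrite cats0 addn0.
move: hp => /= /andP [hzy hp].
have hlw : lattice w by have := @lattice_take _ (size w) hl; rewrite take_size_cat.
have hzr : r <= count_mem z w by apply: leq_trans hr (@lattice_iter _ _ _ hlw hzy).
have hzN : z < N by move: hN => /allP; apply; rewrite mem_cat inE eqxx orbT.
have := IH (rcons w z) z r.+1.
rewrite cat_rcons => /(_ hl) /(_ hN) /(_ hp).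
rewrite -cats1 count_cat /= eqxx cats1 F_rcons //.
have : r < count_mem z w + 1 by lia.
move=> h1 /(_ h1).
have hb : t <= r -> (t <= count_mem z w) = true by move=> ht; apply: leq_trans ht hzr.
move: hb; case: (t <= count_mem z w) => hb /=; case: (leqP t r) => htr; try (have := hb htr; done); lia.
Qed.

Lemma Bcore N t rows : lattice (flatten rows) -> all (fun x => x < N) (flatten rows) ->
  all (sorted geq) rows -> sumn [seq size s - t | s <- rows] <= F N t (flatten rows).
Proof.
elim/last_ind: rows => [|rs s IH] //.
rewrite flatten_rcons all_rcons => hl hN /andP [hs hrs].
have hl' : lattice (flatten rs) by have := @lattice_take _ (size (flatten rs)) hl; rewrite take_size_cat.
have hN' : all (fun x => x < N) (flatten rs) by move: hN; rewrite all_cat => /andP [].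
have := IH hl' hN' hrs.
have hp : path geq (head 0 s) s by case: s hs {hl hN} => //= z s' ->; rewrite leqnn.
have := @L1 N t s (flatten rs) (head 0 s) 0 hl hN hp (leq0n _).
rewrite map_rcons -cats1 sumn_cat /=. lia.
Qed.

Definition S (a : seq nat) i := sumn (map predn (drop i a)).

Lemma size_outer a : size (ribbon_outer a) = size a.
Proof. by rewrite size_map size_iota. Qed.

Lemma nth_outer a i : nth 0 (ribbon_outer a) i = if i < size a then (S a i).+1 else 0.
Proof.
case: ltnP => h.
  by rewrite (nth_map 0) ?size_iota // nth_iota.
by rewrite nth_default // size_outer.
Qed.

Lemma nth_inner a i : i < size a -> nth 0 (ribbon_inner a) i = S a i.+1.
Proof. by move=> h; rewrite (nth_map 0) ?size_iota // nth_iota. Qed.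

Lemma S_step a i : i < size a -> S a i = (nth 0 a i).-1 + S a i.+1.
Proof. by move=> h; rewrite /S (drop_nth 0 h). Qed.

Lemma nth_pos {a i} : is_composition a -> i < size a -> 0 < nth 0 a i.
Proof. by move=> /allP h hi; apply: h; apply: mem_nth. Qed.

Lemma lam_mu a i : is_composition a -> i < size a ->
  nth 0 (ribbon_outer a) i = nth 0 (ribbon_inner a) i + nth 0 a i.
Proof.
move=> ha hi; rewrite nth_outer hi nth_inner // S_step //.
have := nth_pos ha hi; lia.
Qed.

Lemma sorted_map_iota (f : nat -> nat) L : forall m,
  (forall j, m <= j -> j.+1 < m + L -> f j <= f j.+1) -> sorted leq (map f (iota m L)).
Proof.
elim: L => [|L IH] m h //=.
case: L IH h => [|L] IH h //=.
apply/andP; split; first by apply: h; lia.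
have := IH m.+1 (fun j h1 h2 => h j (ltnW h1) ltac:(lia)). by [].
Qed.

Lemma fsum_big nu t : fsum nu t = \sum_(x < size nu) (nth 0 nu x - t).
Proof. by rewrite /fsum sumnE big_map (big_nth 0) big_mkord. Qed.

Lemma B_ribbon a nu t : is_composition a -> ribbon_support a nu -> fsum a t <= fsum nu t.
Proof.
move=> ha [[hpos hsort] [T [hrow [hcol [hcont hlat]]]]].
set lam := ribbon_outer a; set mu := ribbon_inner a.
set rows := [seq [seq T i j | j <- rev (iota (nth 0 mu i) (nth 0 lam i - nth 0 mu i))]
          | i <- iota 0 (size lam)].
have hW : reading_word lam mu T = flatten rows by [].
have hN : all (fun x => x < size nu) (flatten rows).
  apply/allP => x hx; rewrite ltnNge; apply/negP => hge.
  have : 0 < count_mem x (flatten rows) by rewrite -has_count has_pred1.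
  by rewrite -hW hcont nth_default.
have hs : all (sorted geq) rows.
  apply/allP => r /mapP [i hi ->]. rewrite map_rev rev_sorted.
  apply: sorted_map_iota => j h1 h2; apply: hrow; rewrite /in_skew; apply/andP; move: h1 h2; rewrite /lam /mu; lia.
have := @Bcore (size nu) t rows (hlat : lattice (flatten rows)) hN hs.
rewrite -hW /F.
rewrite (eq_bigr (fun x : 'I_(size nu) => nth 0 nu x - t)); last by move=> i _; rewrite hcont.
rewrite -fsum_big.
suff -> : sumn [seq size s - t | s <- rows] = fsum a t by [].
rewrite /rows /fsum.
have -> : map (fun s => size s - t) (map (fun i => [seq T i j | j <- rev (iota (nth 0 mu i) (nth 0 lam i - nth 0 mu i))]) (iota 0 (size lam)))
   = [seq nth 0 a i - t | i <- iota 0 (size lam)].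
  rewrite -map_comp; apply/eq_in_map => i; rewrite mem_iota size_outer add0n => /andP [_ hi].
  by rewrite /= size_map size_rev size_iota /lam /mu lam_mu // addKn.
by rewrite size_outer -{3}(mkseq_nth 0 a) /mkseq -map_comp.
Qed.

Definition occ (L : seq nat) := [seq count_mem (nth 0 L p) (take p L) | p <- iota 0 (size L)].

Lemma occ_rcons L c : occ (rcons L c) = rcons (occ L) (count_mem c L).
Proof.
rewrite /occ size_rcons -addn1 iotaD map_cat /= add0n nth_rcons ltnn eqxx.
rewrite -[rcons L c]cats1 take_size_cat // cats1; congr rcons.
apply/eq_in_map => p; rewrite mem_iota add0n => /andP [_ hp].
by rewrite nth_cat hp takel_cat // ltnW.
Qed.

Lemma take_occ n L : take n (occ L) = occ (take n L).
Proof.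
rewrite /occ -map_take take_iota size_take_min.
apply/eq_in_map => p; rewrite mem_iota add0n => /andP [_ hp].
rewrite nth_take ?take_takel //; lia.
Qed.

Definition K M x L := \sum_(d < M) (x < count_mem (nat_of_ord d) L).

Lemma count_occ M x L : all (fun c => c < M) L -> count_mem x (occ L) = K M x L.
Proof.
elim/last_ind: L => [|L c IH].
  by move=> _; rewrite /K big1.
rewrite all_rcons => /andP [hc hL].
rewrite occ_rcons -!cats1 count_cat IH // /K.
rewrite (bigD1 (Ordinal hc)) // [in RHS](bigD1 (Ordinal hc)) //.
rewrite [in X in _ = X + _]/= count_cat /= eqxx.
have -> : \sum_(i < M | i != Ordinal hc) (x < count_mem (nat_of_ord i) (L ++ [:: c]))
   = \sum_(i < M | i != Ordinal hc) (x < count_mem (nat_of_ord i) L).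
  apply: eq_bigr => i hi. rewrite count_cat /=.
  have : (c == i) = false.
    apply/negbTE; apply: contra hi => /eqP e; apply/eqP; apply: val_inj => /=; by rewrite e.
  by move=> ->; rewrite /= !addn0.
set S := \sum_(_ < _ | _) _.
rewrite /= !addn0 addn1 ltnS.
case: (ltngtP x (count_mem c L)) => h /=; lia.
Qed.

Lemma le_sumn s x : x \in s -> x <= sumn s.
Proof. elim: s => [|a s IH] //=; rewrite inE => /orP [/eqP ->|h]; first lia. have := IH h; lia. Qed.

Lemma lattice_occ L : lattice (occ L).
Proof.
move=> n k; rewrite take_occ.
have hM : all (fun c => c < (sumn L).+1) (take n L).
  apply/allP => c hc; rewrite ltnS; apply: le_sumn; exact: mem_take hc.
rewrite !(@count_occ _ _ _ hM) /K; apply: leq_sum => d _.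
case: ltnP => h //=; by rewrite (ltnW h).
Qed.

Lemma cnt_flat al c : count_mem c (flatten [seq iota 1 a | a <- al]) = count (fun a => (0 < c) && (c <= a)) al.
Proof.
elim: al => [|a al IH] //=; rewrite count_cat IH count_uniq_mem ?iota_uniq // mem_iota.
congr (_ + _); case: c => //= c; by rewrite add1n ltnS.
Qed.

Lemma sorted_count nu x c : sorted geq nu -> 0 < c -> (x < count (fun a => c <= a) nu) = (c <= nth 0 nu x).
Proof.
elim: nu x => [|a nu IH] x hs hc /=; first by rewrite nth_nil; case: c hc.
have hall : all (fun b => b <= a) nu.
  have := @order_path_min _ geq a nu; move=> h; have := h (fun x y z h1 h2 => leq_trans h2 h1) hs.
  by [].
have hs' : sorted geq nu by apply: path_sorted hs.
have hz : c > a -> count (fun b => c <= b) nu = 0.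
  move=> hca; apply/eqP; rewrite -leqn0 leqNgt -has_count; apply/hasP => -[b hb hcb].
  have := (allP hall) b hb; lia.
case: x => [|x] /=.
  case: (leqP c a) => h /=; first lia. rewrite hz //.
case: (leqP c a) => h /=.
  by rewrite add1n ltnS IH.
rewrite hz // add0n ltn0; apply/esym/negbTE; rewrite -ltnNge.
case: (ltnP x (size nu)) => hx; last by rewrite nth_default.
have := (allP hall) (nth 0 nu x) (mem_nth 0 hx); lia.
Qed.

Lemma sum_ind M v : \sum_(d < M) ((0 < nat_of_ord d) && (nat_of_ord d <= v)) = minn v M.-1.
Proof.
elim: M => [|M IH]; first by rewrite big_ord0 minn0.
rewrite big_ord_recr /= IH.
case: M {IH} => [|M] /=; first by rewrite minn0.
case: leqP => h /=; lia.
Qed.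

Lemma occ_cat_iota L a : occ (L ++ iota 1 a) = occ L ++ [seq count_mem c L | c <- iota 1 a].
Proof.
elim: a => [|a IH]; first by rewrite !cats0.
have -> : iota 1 a.+1 = rcons (iota 1 a) a.+1 by have := iotaD 1 a 1; rewrite addn1 => ->; rewrite -cats1 add1n.
rewrite -rcons_cat occ_rcons IH map_rcons rcons_cat count_cat.
rewrite (count_uniq_mem _ (iota_uniq _ _)) mem_iota.
by rewrite add1n ltnn andbF addn0.
Qed.

Lemma R a m : [seq a - (j - m) | j <- rev (iota m a)] = iota 1 a.
Proof.
elim: a m => [|a IH] m //.
have -> : iota m a.+1 = rcons (iota m a) (m + a) by have := iotaD m a 1; rewrite addn1 => ->; rewrite cats1.
rewrite rev_rcons /= -/(iota 2 a).
have -> : 2 = 1 + 1 by [].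
rewrite iotaDl -(IH m) -map_comp; congr (_ :: _); first lia.
apply/eq_in_map => j; rewrite mem_rev mem_iota => /andP [h1 h2] /=; lia.
Qed.

Lemma G_occ al : flatten [seq [seq count (fun a => c <= a) (take i al) | c <- iota 1 (nth 0 al i)]
   | i <- iota 0 (size al)] = occ (flatten [seq iota 1 a | a <- al]).
Proof.
elim/last_ind: al => [|al a IH] //.
rewrite size_rcons; have := iotaD 0 (size al) 1; rewrite addn1 => ->.
rewrite map_cat flatten_cat /= add0n nth_rcons ltnn eqxx.
rewrite -[rcons al a]cats1 take_size_cat // cats0.
rewrite map_cat flatten_cat /= cats0 occ_cat_iota -IH.
set X := flatten _; set Y := flatten _.
have -> : X = Y.
  rewrite /X /Y; congr flatten; apply/eq_in_map => i; rewrite mem_iota add0n => /andP [_ hi].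
  by rewrite nth_cat hi takel_cat // ltnW.
congr (_ ++ _).
apply/eq_in_map => c; rewrite mem_iota => /andP [hc _].
rewrite cnt_flat; apply: eq_count => b /=. by rewrite hc.
Qed.

Definition Tc (al : seq nat) (i j : nat) :=
  count (fun a => nth 0 al i - (j - nth 0 (ribbon_inner al) i) <= a) (take i al).

Lemma readW al : is_composition al ->
  reading_word (ribbon_outer al) (ribbon_inner al) (Tc al) = occ (flatten [seq iota 1 a | a <- al]).
Proof.
move=> ha; rewrite -G_occ /reading_word size_outer; congr flatten.
apply/eq_in_map => i; rewrite mem_iota add0n => /andP [_ hi].
rewrite lam_mu // addKn -(R (nth 0 al i) (nth 0 (ribbon_inner al) i)) -map_comp.
by apply: eq_map.
Qed.

Lemma geq_total : total geq.
Proof. move=> x y; exact: leq_total. Qed.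

Lemma content al x : is_composition al ->
  count_mem x (occ (flatten [seq iota 1 a | a <- al])) = nth 0 (sort geq al) x.
Proof.
move=> ha.
set nu := sort geq al.
have hp : perm_eq nu al by rewrite /nu perm_sort perm_refl.
have hs : sorted geq nu by apply: sort_sorted; exact: geq_total.
have hM : all (fun c => c < (sumn al).+1) (flatten [seq iota 1 a | a <- al]).
  apply/allP => c /flattenP [s /mapP [a hain ->]]; rewrite mem_iota => /andP [_ h].
  have := @le_sumn _ _ hain; lia.
rewrite (@count_occ _ _ _ hM) /K.
transitivity (\sum_(d < (sumn al).+1) ((0 < nat_of_ord d) && (nat_of_ord d <= nth 0 nu x))).
  apply: eq_bigr => d _; rewrite cnt_flat.
  case: (nat_of_ord d) => [|e] /=.
    by rewrite (eq_count (a2 := pred0)) // count_pred0.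
  rewrite -(permP hp) -[in X in _ = X]/(e.+1 <= _).
  by rewrite (@sorted_count _ x e.+1 hs).
rewrite sum_ind /=.
have : nth 0 nu x <= sumn al.
  rewrite -(perm_sumn hp).
  case: (ltnP x (size nu)) => h; first by apply: le_sumn; apply: mem_nth.
  by rewrite nth_default.
lia.
Qed.

Lemma perm_sort_geq al : perm_eq (sort geq al) al.
Proof. by rewrite perm_sort perm_refl. Qed.

Lemma lemC al : is_composition al -> ribbon_support al (sort geq al).
Proof.
move=> ha; split.
  split; first by rewrite /is_composition (perm_all _ (perm_sort_geq al)).
  by apply: sort_sorted; exact: geq_total.
exists (Tc al); split; [|split; [|split]].
- move=> i j /andP [h1 h2] /andP [h3 h4]; rewrite /Tc; apply: sub_count => b /=; lia.
- move=> i j /andP [h1 h2] /andP [h3 h4].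
  move: h4; rewrite nth_outer; case: (ltnP i.+1 (size al)) => hi1 h4 //.
  have hi : i < size al by lia.
  have e1 := @lam_mu _ _ ha hi; have e2 := @lam_mu _ _ ha hi1.
  have e3 := @S_step _ _ hi1; have e4 := @nth_inner _ _ hi; have e5 := @nth_inner _ _ hi1.
  have p1 := nth_pos ha hi1.
  rewrite nth_outer hi in h2.
  rewrite /Tc.
  have -> : nth 0 al i.+1 - (j - nth 0 (ribbon_inner al) i.+1) = 1 by lia.
  have hall : all (fun b => 0 < b) (take i.+1 al).
    apply/allP => b hb; apply: (allP ha); exact: mem_take hb.
  move: hall; rewrite all_count => /eqP ->; rewrite size_takel //.
  have := count_size (fun a => nth 0 al i - (j - nth 0 (ribbon_inner al) i) <= a) (take i al).
  rewrite size_takel; [lia | lia].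
- by move=> k; rewrite readW // content.
- rewrite readW //; exact: lattice_occ.
Qed.

Theorem proposition2p3 (alpha beta : seq nat) :
  is_composition alpha -> is_composition beta ->
  (forall nu, ribbon_support alpha nu <-> ribbon_support beta nu) ->
  perm_eq alpha beta.
Proof.
move=> ha hb h.
apply: (@partD alpha beta ha hb) => t.
have h1 := @B_ribbon _ _ t ha ((h _).2 (@lemC _ hb)).
have h2 := @B_ribbon _ _ t hb ((h _).1 (@lemC _ ha)).
rewrite (@fsum_perm _ _ t (perm_sort_geq _)) in h1.
rewrite (@fsum_perm _ _ t (perm_sort_geq _)) in h2.
lia.
Qed.
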